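(* For every real $M\ge2$, $$\frac12\log(2M+1)<\frac{M+1}{i}\mathcal{F}_M(iM)=K\Big(\frac{M}{M+1}\Big)<\frac12\Big(\frac{12}{5}+\log(2M+1)\Big),$$ where $\frac{M+1}{i}\mathcal{F}_M(iM)=(M+1)\displaystyle\int_0^M\frac{dt}{\sqrt{(M^2-t^2)((M+1)^2-t^2)}}$ and $K(k)=\displaystyle\int_0^1\frac{dx}{\sqrt{(1-x^2)(1-k^2x^2)}}$ is the complete elliptic integral of the first kind.
   Context: $\mathcal{F}_M(z)=\int_0^z\frac{d\zeta}{\sqrt{(\zeta^2-(iM)^2)(\zeta^2-(i(M+1))^2)}}$, $z$ in the closed left half-plane, with the branch of the square root positive on the positive real axis; $\mathcal{F}_M(iM)$ is the integral along the segment $[0,iM]$ of the imaginary axis. *)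

(* Defs.v *)
From HB Require Import structures.
From mathcomp Require Import all_boot all_order all_algebra.
From mathcomp Require Import all_classical all_reals all_analysis.
Set Implicit Arguments. Unset Strict Implicit. Unset Printing Implicit Defensive.
Import Order.TTheory GRing.Theory Num.Theory.
Import numFieldNormedType.Exports.
Local Open Scope classical_set_scope.
Local Open Scope ring_scope.

(* (1/i) * F_M(iM): along the segment [0, iM], zeta = i t, d zeta = i dt and
   the principal square root of (M^2 - t^2)((M+1)^2 - t^2) >= 0 is positive,
   so F_M(iM) = i * \int_0^M dt / sqrt((M^2-t^2)((M+1)^2-t^2)).
   The (improper, nonnegative) integral is taken as a Lebesgue integral in
   the extended reals. *)
Definition FMiM_div_i (R : realType) (M : R) : \bar R :=
  (\int[@lebesgue_measure R]_(t in `]0%R, M[%classic)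
     ((Num.sqrt ((M ^+ 2 - t ^+ 2) * ((M + 1) ^+ 2 - t ^+ 2)))^-1)%:E)%E.

Definition ellipticK (R : realType) (k : R) : \bar R :=
  (\int[@lebesgue_measure R]_(x in `]0%R, 1%R[%classic)
     ((Num.sqrt ((1 - x ^+ 2) * (1 - k ^+ 2 * x ^+ 2)))^-1)%:E)%E.

(* Main.v *)
Require Import Defs.
From HB Require Import structures.
From mathcomp Require Import all_boot all_order all_algebra.
From mathcomp Require Import all_classical all_reals all_analysis.
From mathcomp Require Import measurable_realfun.
From mathcomp Require Import ring lra.
Import Order.TTheory GRing.Theory Num.Theory.
Import numFieldNormedType.Exports.
Local Open Scope classical_set_scope.
Local Open Scope ring_scope.

Section Aux.
Context {R : realType}.
Local Notation mu := (@lebesgue_measure R).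

Definition pmu (M : R) : {measure set (measurableTypeR R) -> \bar R} :=
  @measure_function_pushforward__canonical__measure_function_Measure _ _ _
    (measurableTypeR R) _ mu ( *%R M : R -> measurableTypeR R)
    (@mulrl_measurable R setT M).

Lemma lebesgue_scale (M : R) (M0 : 0 < M) (A : set R) : measurable A ->
  mu A = mscale (NngNum (ltW M0)) (pmu M) A.
Proof.
move=> mA; apply: lebesgue_measure_unique => //= _ [[a b]] _ <-.
rewrite /mscale /= /pushforward /=.
have -> : [eta *%R M] @^-1` `]a, b]%classic = `]a / M, b / M]%classic.
  apply/seteqP; split => x /=; rewrite !in_itv /=.
  - by move=> /andP[h1 h2]; rewrite ltr_pdivrMr // ler_pdivlMr // [x * M]mulrC h1 h2.
  - move=> /andP[h1 h2]; rewrite -ltr_pdivrMl // -ler_pdivlMl //.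
    by rewrite mulrC h1 /= mulrC.
rewrite !lebesgue_measure_itv /= !lte_fin ltr_pM2r ?invr_gt0 //.
case: ifPn => ab; last by rewrite mule0.
by rewrite -EFinM -EFinD mulrBr !mulrA !(mulrC M) -!mulrA divff ?gt_eqF // !mulr1.
Qed.

Lemma integral_scale (M : R) (M0 : 0 < M) (f : R -> R) :
  (forall x, 0 <= f x) -> measurable_fun `]0, M[ f ->
  (\int[mu]_(t in `]0%R, M[%classic) (f t)%:E =
   M%:E * \int[mu]_(x in `]0%R, 1%R[%classic) (f (M * x))%:E)%E.
Proof.
move=> f0 mf.
rewrite (@eq_measure_integral _ _ _ _ (mscale (NngNum (ltW M0)) (pmu M))); last first.
  by move=> A mA _; exact: lebesgue_scale.
rewrite ge0_integral_mscale //=; last 2 first.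
- exact/measurable_EFinP.
- by move=> x _; rewrite lee_fin.
congr (_ * _)%E.
rewrite /pmu ge0_integral_pushforward //=; last 2 first.
- exact/measurable_EFinP.
- by move=> x _; rewrite lee_fin.
have -> : [eta *%R M] @^-1` `]0, M[%classic = `]0, 1[%classic.
  apply/seteqP; split => x /=; rewrite !in_itv /=.
  - by move=> /andP[h1 h2]; rewrite (pmulr_rgt0 _ M0) in h1; rewrite h1 /= -(ltr_pM2l M0) mulr1.
  - by move=> /andP[h1 h2]; rewrite pmulr_rgt0 // h1 /= -[X in _ < X]mulr1 ltr_pM2l.
by [].
Qed.

Lemma isqrt_meas (D : set R) (p : R -> R) : open D -> continuous p ->
  (forall x, D x -> 0 < p x) -> measurable_fun D (fun x => (Num.sqrt (p x))^-1).
Proof.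
move=> oD cp p0; apply: open_continuous_measurable_fun => // x /[!inE] Dx.
apply: (@continuousV R R (fun y => Num.sqrt (p y)) x); first by rewrite gt_eqF // sqrtr_gt0 p0.
apply: continuous_comp; first exact: cp.
exact: sqrt_continuous.
Qed.

Lemma poly_cont (a b : R) : continuous (fun t : R => (a - t ^+ 2) * (b - t ^+ 2)).
Proof.
move=> x; apply: (@continuousM R R (fun t => a - t ^+ 2) (fun t => b - t ^+ 2) x);
  apply: (@continuousB R R^o R); try exact: cst_continuous;
  exact: exprn_continuous.
Qed.

Lemma eq_part (M : R) (hM : 0 < M) :
  ((M + 1)%:E * FMiM_div_i M = ellipticK (M / (M + 1)))%E.
Proof.
have M1 : 0 < M + 1 by lra.
have mg : measurable_fun `]0%R, M[%classic
   (fun t => (Num.sqrt ((M ^+ 2 - t ^+ 2) * ((M + 1) ^+ 2 - t ^+ 2)))^-1).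
  apply: isqrt_meas; [exact: interval_open | exact: poly_cont |].
  move=> x /=; rewrite in_itv /= => /andP[x0 xM].
  apply: mulr_gt0; rewrite subr_gt0 expr2 [_ ^+ 2]expr2; nra.
rewrite /FMiM_div_i (@integral_scale M hM _ _ mg); last first.
  by move=> x; rewrite invr_ge0 sqrtr_ge0.
rewrite /ellipticK.
transitivity ((M + 1)%:E * (M%:E * \int[mu]_(x in `]0%R, 1%R[%classic)
   (((M * (M + 1))^-1)%:E * ((Num.sqrt ((1 - x ^+ 2) * (1 - (M / (M + 1)) ^+ 2 * x ^+ 2)))^-1)%:E)))%E.
  congr (_ * (_ * _))%E; apply: eq_integral => x /[!inE] /=; rewrite in_itv /= => /andP[x0 x1].
  rewrite -EFinM; congr EFin.
  rewrite -invfM; congr GRing.inv.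
  have -> : (M ^+ 2 - (M * x) ^+ 2) * ((M + 1) ^+ 2 - (M * x) ^+ 2) =
    (M * (M + 1)) ^+ 2 * ((1 - x ^+ 2) * (1 - (M / (M + 1)) ^+ 2 * x ^+ 2)).
    by field; rewrite gt_eqF.
  rewrite sqrtrM ?sqr_ge0 // sqrtr_sqr ger0_norm //; exact: mulr_ge0 (ltW hM) (ltW M1).
have mf : measurable_fun (`]0%R, 1%R[%classic : set R)
    (fun x => (Num.sqrt ((1 - x ^+ 2) * (1 - (M / (M + 1)) ^+ 2 * x ^+ 2)))^-1).
  apply: isqrt_meas; [exact: interval_open | |].
  + move=> y; apply: (@continuousM R R (fun t => 1 - t ^+ 2) (fun t => 1 - (M / (M + 1)) ^+ 2 * t ^+ 2) y).
      apply: (@continuousB R R^o R); [exact: cst_continuous|exact: exprn_continuous].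
    apply: (@continuousB R R^o R); first exact: cst_continuous.
    apply: (@continuousM R R (fun=> (M / (M + 1)) ^+ 2) (fun t => t ^+ 2) y);
      [exact: cst_continuous|exact: exprn_continuous].
  + move=> x /=; rewrite in_itv /= => /andP[x0 x1].
    have k1 : M / (M + 1) < 1 by rewrite ltr_pdivrMr //; lra.
    have k0 : 0 <= M / (M + 1) by rewrite divr_ge0 //; lra.
    have x21 : x ^+ 2 < 1 by rewrite expr2; nra.
    have k21 : (M / (M + 1)) ^+ 2 < 1 by rewrite expr2; nra.
    apply: mulr_gt0; rewrite subr_gt0 //.
    have a0 : 0 <= (M / (M + 1)) ^+ 2 by rewrite exprn_ge0.
    have b0 : 0 <= x ^+ 2 by rewrite exprn_ge0 // ltW.
    nra.
rewrite ge0_integralZl_EFin //; try (by move=> x _; rewrite lee_fin invr_ge0 sqrtr_ge0);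
  try (exact/measurable_EFinP); try (by rewrite invr_ge0 mulr_ge0 // ltW).
rewrite !muleA -!EFinM.
have -> : (M + 1) * M * (M * (M + 1))^-1 = 1 by field; rewrite !gt_eqF.
by rewrite mul1e.
Qed.
Lemma improper_le (M B : R) (h G : R -> R) :
  0 < M ->
  (forall t, 0 <= t < M -> 0 <= h t) ->
  (forall t, 0 <= t < M -> {for t, continuous h}) ->
  (forall t, 0 <= t < M -> is_derive t 1 G (h t)) ->
  (forall b, 0 < b < M -> G b - G 0 <= B) ->
  (\int[mu]_(t in `]0%R, M[%classic) (h t)%:E <= B%:E)%E.
Proof.
move=> M0 h0 hc dG GB.
pose b n : R := M - M / n.+2%:R.
have n2 n : 1 < n.+2%:R :> R by rewrite ltr1n.
have b0 n : 0 < b n.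
  by rewrite /b subr_gt0 ltr_pdivrMr ?(lt_trans ltr01) // ltr_pMr.
have bM n : b n < M by rewrite /b ltrBlDr ltrDl divr_gt0 // (lt_trans ltr01).
pose F n := `]0%R, b n]%classic : set R.
have mF n : measurable (F n) by exact: measurable_itv.
have ndF : nondecreasing_seq F.
  apply/nondecreasing_seqP => n; apply/subsetPset => x; rewrite /F /= !in_itv /=.
  move=> /andP[-> xb] /=; apply: (le_trans xb); rewrite /b lerD2l lerN2.
  rewrite ler_pM2l // lef_pV2 ?posrE ?ler_nat // (lt_trans ltr01) //.
have UF : \bigcup_n F n = `]0%R, M[%classic.
  apply/seteqP; split => x /=.
  - move=> [n _]; rewrite /F /= !in_itv /= => /andP[x0 xb]; rewrite x0 /=; exact: le_lt_trans xb (bM n).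
  - rewrite in_itv /= => /andP[x0 xM].
    have Mx : 0 < M - x by rewrite subr_gt0.
    exists (Num.truncn (M / (M - x))) => //; rewrite /F /= in_itv /= x0 /= /b.
    have := archimedean.Num.Theory.real_truncnS_gt (num_real (M / (M - x))).
    set k := Num.truncn _ => hk.
    rewrite lerBrDl -lerBrDr ler_pdivrMr ?(lt_trans ltr01) //.
    rewrite ltr_pdivrMr // in hk.
    apply: ltW; apply: (lt_le_trans hk); by rewrite mulrC ler_pM2l // ler_nat.
have mh : measurable_fun `]0%R, M[%classic h.
  apply: open_continuous_measurable_fun; first exact: interval_open.
  move=> x /[!inE] /=; rewrite in_itv /= => /andP[x0 xM]; apply: hc; by rewrite xM andbT ltW.
have mhF n : measurable_fun (F n) (EFin \o h).
  apply/measurable_EFinP; apply: measurable_funS mh => //.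
  by rewrite -UF; exact: bigcup_sup.
have h0F n x : F n x -> (0 <= (EFin \o h) x)%E.
  rewrite /F /= in_itv /= => /andP[x0 xb]; rewrite lee_fin h0 // (ltW x0) /=; exact: le_lt_trans xb (bM n).
have := @ge0_nondecreasing_set_cvg_integral _ (measurableTypeR R) R F (EFin \o h) mu ndF mF mhF h0F.
rewrite UF => cvgI.
rewrite -(cvg_lim _ cvgI) //; apply: lime_le; first by apply/cvg_ex; eexists; exact: cvgI.
apply: nearW => n /=.
rewrite /F integral_itv_obnd_cbnd; last exact: mhF.
rewrite (@continuous_FTC2 _ h G) //.
- by rewrite -EFinB lee_fin GB // b0 bM.
- apply: continuous_in_subspaceT => x /[!inE] /=; rewrite in_itv /= => /andP[x0 xb].
  by apply: hc; rewrite x0 (le_lt_trans xb).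
- split.
  + move=> x /=; rewrite in_itv /= => /andP[x0 xb].
    by have [] := dG x; rewrite ?ltW ?(lt_trans xb) //.
  + apply: cvg_at_right_filter.
    have /derivable1_diffP/differentiable_continuous : derivable G 0 1.
      by have [] := dG 0; rewrite ?lexx.
    done.
  + apply: cvg_at_left_filter.
    have /derivable1_diffP/differentiable_continuous : derivable G (b n) 1.
      by have [] := dG (b n); rewrite ?ltW ?b0 ?bM.
    done.
- move=> x /=; rewrite in_itv /= => /andP[x0 xb].
  rewrite derive1E; apply: derive_val.
  by apply: dG; rewrite ltW //= (lt_trans xb).
Qed.
Lemma der_lin (a b x : R) : is_derive x 1 (fun t => a + b * t) b.
Proof.
have d1 : is_derive x 1 (cst a : R -> R^o) 0 := is_derive_cst _ _ _.
have d2 : is_derive x (1:R^o) (id : R^o -> R^o) 1 := is_derive_id _ _.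
have d3 := @is_deriveZ _ R^o R^o id b x 1 1 d2.
have d4 := @is_deriveD _ R^o R^o _ _ x 1 _ _ d1 d3.
by rewrite add0r scaler1 in d4.
Qed.

Lemma der_sqrt_lin (a b x : R) : 0 < a + b * x ->
  is_derive x 1 (fun t => Num.sqrt (a + b * t)) (b / (2 * Num.sqrt (a + b * x))).
Proof.
move=> h.
have := @is_derive1_comp R Num.sqrt (fun t => a + b * t) x _ _ (is_derive1_sqrt h) (der_lin a b x).
by rewrite mulrC.
Qed.

Lemma der_ln (f : R -> R) (x df : R) : 0 < f x -> is_derive x 1 f df ->
  is_derive x 1 (fun t => ln (f t)) (df / f x).
Proof.
move=> h d.
have := @is_derive1_comp R (@ln R) f x _ _ (is_derive1_ln h) d.
by rewrite mulrC.
Qed.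

Lemma der_add (f g : R -> R) (x df dg : R) : is_derive x 1 f df -> is_derive x 1 g dg ->
  is_derive x 1 (fun t => f t + g t) (df + dg).
Proof. move=> h1 h2; exact: (@is_deriveD _ R^o R^o f g). Qed.

Lemma der_sub (f g : R -> R) (x df dg : R) : is_derive x 1 f df -> is_derive x 1 g dg ->
  is_derive x 1 (fun t => f t - g t) (df - dg).
Proof. move=> h1 h2; exact: (@is_deriveB _ R^o R^o f g). Qed.

Lemma der_scale (f : R -> R) (k x df : R) : is_derive x 1 f df ->
  is_derive x 1 (fun t => k * f t) (k * df).
Proof. move=> h; exact: (@is_deriveZ _ R^o R^o f k). Qed.


Arguments der_lin : clear implicits.
Arguments der_sqrt_lin {a b x}.
Arguments der_ln {f x df}.
Arguments der_add {f g x df dg}.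
Arguments der_sub {f g x df dg}.
Arguments der_scale {f} k {x df}.

Definition cc (M : R) := 2 * M + 2 / 5.
Definition ss (M : R) := Num.sqrt (cc M * (cc M + 1)).
Definition SS (M t : R) := Num.sqrt (cc M * (M + 1) + (- cc M) * t) +
  Num.sqrt ((cc M + 1) * M + (- (cc M + 1)) * t).
Definition GG (M t : R) := (- (ss M)^-1) * (2 * ln (SS M t) - ln ((M + 2 / 5) + 1 * t)).
Definition hh (M t : R) := (Num.sqrt ((M - t) * (M + 1 - t)) * (M + t + 2 / 5))^-1.

Lemma GG_derive (M t : R) : 0 < M -> 0 <= t < M -> is_derive t 1 (GG M) (hh M t).
Proof.
move=> M0 /andP[t0 tM].
have c0 : 0 < cc M by rewrite /cc; lra.
have pA : 0 < cc M * (M + 1) + (- cc M) * t by nra.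
have pB : 0 < (cc M + 1) * M + (- (cc M + 1)) * t by nra.
have pT : 0 < (M + 2 / 5) + 1 * t by lra.
set A := Num.sqrt (cc M * (M + 1) + (- cc M) * t).
set B := Num.sqrt ((cc M + 1) * M + (- (cc M + 1)) * t).
have A0 : 0 < A by rewrite sqrtr_gt0.
have B0 : 0 < B by rewrite sqrtr_gt0.
have dS := der_add (der_sqrt_lin pA) (der_sqrt_lin pB).
have dlnS := der_ln (f := SS M) (addr_gt0 A0 B0) dS.
have dG := der_scale (- (ss M)^-1) (der_sub (der_scale 2 dlnS) (der_ln (f := fun y => (M + 2 / 5) + 1 * y) pT (der_lin _ _ _))).
apply: (is_derive_eq dG).
rewrite -/A -/B.
have s0 : 0 < ss M by rewrite sqrtr_gt0; nra.
have A2 : A ^+ 2 = cc M * (M + 1) + (- cc M) * t by rewrite sqr_sqrtr // ltW.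
have B2 : B ^+ 2 = (cc M + 1) * M + (- (cc M + 1)) * t by rewrite sqr_sqrtr // ltW.
have s2 : ss M ^+ 2 = cc M * (cc M + 1) by rewrite sqr_sqrtr //; nra.
have sAB : A * B = ss M * Num.sqrt ((M - t) * (M + 1 - t)).
  rewrite /A /B -sqrtrM ?ltW // /ss -sqrtrM; last by nra.
  congr Num.sqrt; ring.
have rE : Num.sqrt ((M - t) * (M + 1 - t)) = A * B / ss M.
  by rewrite sAB; field; rewrite gt_eqF.
rewrite /hh rE.
set T := M + 2 / 5 + 1 * t.
have TE : M + t + 2 / 5 = T by rewrite /T; ring.
rewrite TE.
set E := (cc M * B + (cc M + 1) * A) * T + A * B * (A + B).
have key : E = ss M ^+ 2 * (A + B).
  rewrite /E s2.
  have -> : (cc M * B + (cc M + 1) * A) * T + A * B * (A + B) =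
    (cc M * B + (cc M + 1) * A) * T + A ^+ 2 * B + A * B ^+ 2 by ring.
  rewrite A2 B2 /T /cc; ring.
have eX : - (ss M)^-1 * (2 * ((- cc M / (2 * A) + - (cc M + 1) / (2 * B)) / (A + B)) - 1 / T)
   = (ss M)^-1 * E / (A * B * T * (A + B)).
  rewrite /E; field.
  by rewrite (gt_eqF (addr_gt0 A0 B0)) (gt_eqF A0) (gt_eqF B0) (gt_eqF s0) gt_eqF.
rewrite /SS -/A -/B eX key; field.
by rewrite (gt_eqF (addr_gt0 A0 B0)) (gt_eqF A0) (gt_eqF B0) (gt_eqF s0) gt_eqF.
Qed.

Lemma sq_le (a x : R) : 0 <= a -> a <= x -> a * a <= x ^+ 2.
Proof. move=> a0 ax; rewrite expr2; apply: ler_pM => //. Qed.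

Lemma ln2_le : ln (2 : R) <= 9 / 10 * (4 / 5).
Proof.
pose z : R := 409 / 400.
have z0 : 0 < z by rewrite /z; lra.
have h1 : 942 / 901 <= z ^+ 2 by rewrite /z expr2; lra.
have h2 : 458 / 419 <= z ^+ 4.
  rewrite (_ : z ^+ 4 = (z ^+ 2) ^+ 2); last by rewrite -exprM.
  apply: (le_trans _ (sq_le _ _ _ h1)); lra.
have h3 : 1061 / 888 <= z ^+ 8.
  rewrite (_ : z ^+ 8 = (z ^+ 4) ^+ 2); last by rewrite -exprM.
  apply: (le_trans _ (sq_le _ _ _ h2)); lra.
have h4 : 1252 / 877 <= z ^+ 16.
  rewrite (_ : z ^+ 16 = (z ^+ 8) ^+ 2); last by rewrite -exprM.
  apply: (le_trans _ (sq_le _ _ _ h3)); lra.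
have h5 : 2 <= z ^+ 32.
  rewrite (_ : z ^+ 32 = (z ^+ 16) ^+ 2); last by rewrite -exprM.
  apply: (le_trans _ (sq_le _ _ _ h4)); lra.
have : ln 2 <= ln (z ^+ 32) by rewrite ler_ln ?posrE ?exprn_gt0 //; lra.
rewrite lnXn // => /le_trans; apply.
have : ln z <= 9 / 400.
  by rewrite (_ : z = 1 + 9 / 400); [apply: le_ln1Dx; lra | rewrite /z; lra].
rewrite -mulr_natr; lra.
Qed.



Lemma ss_bound (M : R) : 2 <= M -> M * (M + 1) <= ss M * (M / 2 + 7 / 25).
Proof.
move=> M2.
have c0 : 0 <= cc M * (cc M + 1) by rewrite /cc; nra.
rewrite -(@ler_pXn2r _ 2) // ?nnegrE; last 2 first.
- nra.
- by rewrite mulr_ge0 ?sqrtr_ge0 //; lra.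
rewrite /ss [X in _ <= X]exprMn sqr_sqrtr // /cc.
nra.
Qed.

Lemma final_num (M : R) : 2 <= M ->
  (M + 1) / ss M * (ln (4 * (403 / 400)) + ln (2 * M + 1)) < 6 / 5 + 2^-1 * ln (2 * M + 1).
Proof.
move=> M2.
have l2u := @ln2_le.
have l20 : 0 <= ln (2 : R) by apply: ln_ge0; lra.
have e4 : ln (4 : R) = 2 * ln 2.
  rewrite (_ : (4 : R) = 2 * 2); last by lra.
  by rewrite lnM ?posrE ?mulr_natl ?mulr2n //; lra.
have lku : ln (4 * (403 / 400) : R) <= 2 * ln 2 + 3 / 400.
  rewrite lnM ?posrE; try lra.
  rewrite e4 lerD2l (_ : (403 / 400 : R) = 1 + 3 / 400); last by lra.
  by apply: le_ln1Dx; lra.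
have lk0 : 0 <= ln (4 * (403 / 400) : R) by apply: ln_ge0; lra.
have y0 : 0 <= ln (2 * M + 1) by apply: ln_ge0; lra.
have yu : ln (2 * M + 1) <= 2 * ln 2 + 1 / 4 + (2 * M - 4) / 5.
  have -> : 2 * M + 1 = (4 * (1 + 1 / 4)) * (1 + (2 * M - 4) / 5) by field.
  rewrite lnM ?posrE; try lra.
  rewrite lnM ?posrE; try lra.
  rewrite e4 -!addrA lerD2l; apply: lerD; apply: le_ln1Dx; lra.
have s0 : 0 < ss M by rewrite sqrtr_gt0 /cc; nra.
have sb := ss_bound M M2.
set P := (M + 1) / ss M.
have P0 : 0 <= P by rewrite /P divr_ge0 //; lra.
have MP : M * P <= M / 2 + 7 / 25.
  rewrite /P mulrA ler_pdivrMr //; lra.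
set lk := ln (4 * (403 / 400) : R) in lku lk0 *.
set y := ln (2 * M + 1) in y0 yu *.
set l2 := ln (2 : R) in l2u l20 e4 lku yu.
rewrite -(ltr_pM2l (_ : 0 < M)); last by lra.
apply: (le_lt_trans (_ : _ <= (M / 2 + 7 / 25) * (lk + y))).
  by rewrite mulrA ler_wpM2r //; lra.
have h1 : M * lk <= M * (2 * l2 + 3 / 400) by rewrite ler_wpM2l //; lra.
have h2 : M * l2 <= M * (9 / 10 * (4 / 5)) by rewrite ler_wpM2l //; lra.
nra.
Qed.
Definition ll (M t : R) := ((2 * M + 1 - 2 * t) * (2 * M + 1) / 2)^-1.
Definition LL (M t : R) := - (2 * M + 1)^-1 * ln ((2 * M + 1) + (-2) * t).
Definition gg (M t : R) := (Num.sqrt ((M ^+ 2 - t ^+ 2) * ((M + 1) ^+ 2 - t ^+ 2)))^-1.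
Definition Bnd (M : R) :=
  (ln (2 * (cc M * (M + 1) + (cc M + 1) * M)) - ln (M + 2 / 5)) / ss M.
Lemma cont_aff (a b x : R) : {for x, continuous (fun y : R => a + b * y)}.
Proof.
apply: (@continuousD R R^o R); first exact: cst_continuous.
apply: (@continuousM R R (fun=> b) (fun y => y) x); first exact: cst_continuous.
exact: cvg_id.
Qed.

Lemma hh_cont (M t : R) : 0 <= t < M -> {for t, continuous (hh M)}.
Proof.
move=> /andP[t0 tM].
have p0 : 0 < (M - t) * (M + 1 - t) by apply: mulr_gt0; lra.
apply: (@continuousV R R (fun y => Num.sqrt ((M - y) * (M + 1 - y)) * (M + y + 2 / 5)) t).
  by rewrite mulf_neq0 // gt_eqF // ?sqrtr_gt0 //; lra.
apply: (@continuousM R R (fun y => Num.sqrt ((M - y) * (M + 1 - y))) (fun y => M + y + 2 / 5) t).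
  apply: continuous_comp; last exact: sqrt_continuous.
  apply: (@continuousM R R (fun y => M - y) (fun y => M + 1 - y) t).
    rewrite (_ : (fun y => M - y) = (fun y => M + (-1) * y)); first exact: cont_aff.
    by apply/funext => y; ring.
  rewrite (_ : (fun y => M + 1 - y) = (fun y => (M + 1) + (-1) * y)); first exact: cont_aff.
  by apply/funext => y; ring.
rewrite (_ : (fun y => M + y + 2 / 5) = (fun y => (M + 2 / 5) + 1 * y)); first exact: cont_aff.
by apply/funext => y; ring.
Qed.

Lemma ll_cont (M t : R) : 0 <= t <= M -> {for t, continuous (ll M)}.
Proof.
move=> /andP[t0 tM].
apply: (@continuousV R R (fun y => (2 * M + 1 - 2 * y) * (2 * M + 1) / 2) t).
  by rewrite gt_eqF //; apply: divr_gt0; [apply: mulr_gt0|]; lra.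
rewrite (_ : (fun y => (2 * M + 1 - 2 * y) * (2 * M + 1) / 2) =
  (fun y => 0 + ((2 * M + 1) / 2) * (2 * M + 1 - 2 * y))); last by apply/funext => y; ring.
apply: (@continuousD R R^o R); first exact: cst_continuous.
apply: (@continuousM R R (fun=> (2 * M + 1) / 2) (fun y => 2 * M + 1 - 2 * y) t); first exact: cst_continuous.
rewrite (_ : (fun y => 2 * M + 1 - 2 * y) = (fun y => (2 * M + 1) + (-2) * y)); first exact: cont_aff.
by apply/funext => y; ring.
Qed.

Lemma LL_derive (M t : R) : 0 < M -> 0 <= t <= M -> is_derive t 1 (LL M) (ll M t).
Proof.
move=> M0 /andP[t0 tM].
have p : 0 < (2 * M + 1) + (-2) * t by lra.
have d := der_scale (- (2 * M + 1)^-1)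
  (der_ln (f := fun y => (2 * M + 1) + (-2) * y) p (der_lin _ _ _)).
apply: (is_derive_eq d); rewrite /ll; field.
by rewrite !gt_eqF //; lra.
Qed.

Lemma proper_eq (M : R) (l L : R -> R) : 0 < M ->
  (forall t, 0 <= t <= M -> {for t, continuous l}) ->
  (forall t, 0 <= t <= M -> is_derive t 1 L (l t)) ->
  (\int[mu]_(t in `]0%R, M[%classic) (l t)%:E = (L M - L 0)%:E)%E.
Proof.
move=> M0 lc dL.
have ml : measurable_fun `]0%R, M[%classic l.
  apply: open_continuous_measurable_fun; first exact: interval_open.
  move=> x /[!inE] /=; rewrite in_itv /= => /andP[x0 xM]; apply: lc.
  by rewrite (ltW x0) ltW.
rewrite -(@integral_itv_bndoo _ 0 M _ true false); last exact/measurable_EFinP.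
rewrite (@continuous_FTC2 _ l L) //.
- apply: continuous_in_subspaceT => x /[!inE] /=; rewrite in_itv /= => /andP[x0 xM].
  by apply: lc; rewrite x0 xM.
- split.
  + move=> x /=; rewrite in_itv /= => /andP[x0 xb].
    by have [] := dL x; rewrite ?ltW.
  + apply: cvg_at_right_filter.
    have /derivable1_diffP/differentiable_continuous : derivable L 0 1.
      by have [] := dL 0; rewrite ?lexx ?ltW.
    done.
  + apply: cvg_at_left_filter.
    have /derivable1_diffP/differentiable_continuous : derivable L M 1.
      by have [] := dL M; rewrite ?lexx ?ltW.
    done.
- move=> x /=; rewrite in_itv /= => /andP[x0 xb].
  rewrite derive1E; apply: derive_val.
  by apply: dL; rewrite !ltW.
Qed.

Lemma ll_le_gg (M t : R) : 0 < M -> 0 < t < M -> ll M t <= gg M t.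
Proof.
move=> M0 /andP[t0 tM].
set a := (M - t) * (M + 1 - t).
set b := (M + t) * (M + 1 + t).
have a0 : 0 < a by rewrite /a; apply: mulr_gt0; lra.
have b0 : 0 < b by rewrite /b; apply: mulr_gt0; lra.
have PQ : (M ^+ 2 - t ^+ 2) * ((M + 1) ^+ 2 - t ^+ 2) = a * b by rewrite /a /b; ring.
set W := (2 * M + 1 - 2 * t) * (2 * M + 1) / 2.
have W0 : 0 < W by rewrite /W; apply: divr_gt0; [apply: mulr_gt0|]; lra.
rewrite /ll /gg PQ -/W lef_pV2 ?posrE ?sqrtr_gt0 ?(mulr_gt0 a0 b0) //.
have aW : a <= ((2 * M + 1 - 2 * t) / 2) ^+ 2 by rewrite /a; nra.
have bW : b <= (2 * M + 1) ^+ 2 by rewrite /b; nra.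
have abW : a * b <= W ^+ 2.
  rewrite (_ : W ^+ 2 = ((2 * M + 1 - 2 * t) / 2) ^+ 2 * (2 * M + 1) ^+ 2); last first.
    by rewrite /W; field.
  by apply: ler_pM => //; apply: ltW.
apply: (le_trans (_ : _ <= Num.sqrt (W ^+ 2))).
  exact: ler_wsqrtr.
by rewrite sqrtr_sqr ger0_norm // ltW.
Qed.

Lemma gg_le_hh (M t : R) : 2 <= M -> 0 < t < M -> gg M t <= hh M t.
Proof.
move=> M2 /andP[t0 tM].
have M0 : 0 < M by lra.
set a := (M - t) * (M + 1 - t).
set b := (M + t) * (M + 1 + t).
have a0 : 0 < a by rewrite /a; apply: mulr_gt0; lra.
have b0 : 0 < b by rewrite /b; apply: mulr_gt0; lra.
have PQ : (M ^+ 2 - t ^+ 2) * ((M + 1) ^+ 2 - t ^+ 2) = a * b by rewrite /a /b; ring.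
have hb : (M + t + 2 / 5) ^+ 2 <= b by rewrite /b expr2; nra.
have l0 : 0 < M + t + 2 / 5 by lra.
rewrite /hh /gg PQ -/a.
clearbody a b.
have sa : 0 < Num.sqrt a by rewrite sqrtr_gt0.
rewrite lef_pV2 ?posrE ?sqrtr_gt0 ?(mulr_gt0 a0 b0) ?(mulr_gt0 sa l0) //.
rewrite sqrtrM ?(ltW a0) // ler_pM2l //.
apply: (le_trans (_ : _ <= Num.sqrt ((M + t + 2 / 5) ^+ 2))).
  by rewrite sqrtr_sqr ger0_norm //; lra.
exact: ler_wsqrtr.
Qed.

Lemma ln_sq (x : R) : 0 < x -> 2 * ln x = ln (x ^+ 2).
Proof. by move=> x0; rewrite lnXn // mulr_natl. Qed.

Lemma GG_bound (M b : R) : 2 <= M -> 0 < b < M -> GG M b - GG M 0 <= Bnd M.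
Proof.
move=> M2 /andP[b0 bM].
have c0 : 0 < cc M by rewrite /cc; lra.
have s0 : 0 < ss M by rewrite sqrtr_gt0; nra.
set A0 := Num.sqrt (cc M * (M + 1) + (- cc M) * 0).
set B0 := Num.sqrt ((cc M + 1) * M + (- (cc M + 1)) * 0).
set Ab := Num.sqrt (cc M * (M + 1) + (- cc M) * b).
set Bb := Num.sqrt ((cc M + 1) * M + (- (cc M + 1)) * b).
have pA0 : 0 < cc M * (M + 1) + (- cc M) * 0 by nra.
have pB0 : 0 < (cc M + 1) * M + (- (cc M + 1)) * 0 by nra.
have pAb : cc M <= cc M * (M + 1) + (- cc M) * b by nra.
have A00 : 0 < A0 by rewrite sqrtr_gt0.
have B00 : 0 <= B0 by rewrite sqrtr_ge0.
have Bb0 : 0 <= Bb by rewrite sqrtr_ge0.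
have sc0 : 0 < Num.sqrt (cc M) by rewrite sqrtr_gt0.
have Abc : Num.sqrt (cc M) <= Ab by rewrite ler_wsqrtr.
have S0 : 0 < A0 + B0 by lra.
have Sb : 0 < Ab + Bb by lra.
have hS0 : 2 * ln (A0 + B0) <= ln (2 * (cc M * (M + 1) + (cc M + 1) * M)).
  rewrite ln_sq // ler_ln ?posrE ?exprn_gt0 //; last by nra.
  have eA : A0 ^+ 2 = cc M * (M + 1) + (- cc M) * 0 by rewrite sqr_sqrtr // ltW.
  have eB : B0 ^+ 2 = (cc M + 1) * M + (- (cc M + 1)) * 0 by rewrite sqr_sqrtr // ltW.
  have : (A0 + B0) ^+ 2 <= 2 * (A0 ^+ 2 + B0 ^+ 2).
    have := sqr_ge0 (A0 - B0); rewrite !expr2; lra.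
  move=> h; apply: (le_trans h); rewrite eA eB; lra.
have hSb : ln (cc M) <= 2 * ln (Ab + Bb).
  rewrite (ln_sq _ Sb) -{1}(sqr_sqrtr (ltW c0)) ler_ln ?posrE ?exprn_gt0 //.
  rewrite ler_pXn2r // ?nnegrE; lra.
have hTb : ln ((M + 2 / 5) + 1 * b) <= ln (cc M).
  by rewrite ler_ln ?posrE /cc; lra.
have hT0 : ln ((M + 2 / 5) + 1 * 0) = ln (M + 2 / 5) by rewrite mulr0 addr0.
rewrite /GG /SS -/A0 -/B0 -/Ab -/Bb hT0 /Bnd.
set X := ln (2 * _).
have -> : - (ss M)^-1 * (2 * ln (Ab + Bb) - ln (M + 2 / 5 + 1 * b)) -
   - (ss M)^-1 * (2 * ln (A0 + B0) - ln (M + 2 / 5)) =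
   (2 * ln (A0 + B0) - ln (M + 2 / 5) - (2 * ln (Ab + Bb) - ln (M + 2 / 5 + 1 * b))) / ss M.
  by rewrite /= mulrC; field; rewrite gt_eqF.
rewrite ler_pM2r ?invr_gt0 //.
rewrite /X; lra.
Qed.
End Aux.

Theorem lemma14 (R : realType) (M : R) (hM : 2 <= M) :
  ((2^-1 * ln (2 * M + 1))%:E < (M + 1)%:E * FMiM_div_i M)%E /\
  ((M + 1)%:E * FMiM_div_i M = ellipticK (M / (M + 1)))%E /\
  (ellipticK (M / (M + 1)) < (2^-1 * (12 / 5 + ln (2 * M + 1)))%:E)%E.
Proof.
have M0 : 0 < M by lra.
have E := eq_part M M0.
have gE : FMiM_div_i M =
  (\int[lebesgue_measure]_(t in `]0%R, M[%classic) (gg M t)%:E)%E by [].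
have mgg : measurable_fun `]0%R, M[%classic (gg M).
  apply: isqrt_meas; [exact: interval_open | exact: poly_cont |].
  move=> x /=; rewrite in_itv /= => /andP[x0 xM].
  apply: mulr_gt0; rewrite subr_gt0 expr2 [_ ^+ 2]expr2; nra.
have lo : ((ln (2 * M + 1) / (2 * M + 1))%:E <= FMiM_div_i M)%E.
  have -> : ln (2 * M + 1) / (2 * M + 1) = LL M M - LL M 0.
    rewrite /LL (_ : 2 * M + 1 + -2 * M = 1); last by ring.
    by rewrite ln1 mulr0 mulr0 addr0; field; lra.
  rewrite -(@proper_eq R M (ll M) (LL M) M0 (ll_cont M) (fun t => LL_derive M t M0)) gE.
  apply: ge0_le_integral => //.
  - move=> x; rewrite /= in_itv /= => /andP[x0 xM]; rewrite lee_fin /ll invr_ge0.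
    apply: divr_ge0; [apply: mulr_ge0|]; lra.
  - apply/measurable_EFinP; apply: open_continuous_measurable_fun; first exact: interval_open.
    move=> x /[!inE] /=; rewrite in_itv /= => /andP[x0 xM]; apply: ll_cont.
    by rewrite (ltW x0) (ltW xM).
  - exact/measurable_EFinP.
  - move=> x; rewrite /= in_itv /= => h; rewrite lee_fin; exact: ll_le_gg.
have up : (FMiM_div_i M <= (Bnd M)%:E)%E.
  rewrite gE.
  apply: (le_trans (_ : _ <= \int[lebesgue_measure]_(t in `]0%R, M[%classic) (hh M t)%:E)%E).
    apply: ge0_le_integral => //.
    - by move=> x _; rewrite lee_fin /gg invr_ge0 sqrtr_ge0.
    - exact/measurable_EFinP.
    - apply/measurable_EFinP; apply: open_continuous_measurable_fun; first exact: interval_open.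
      move=> x /[!inE] /=; rewrite in_itv /= => /andP[x0 xM]; apply: hh_cont.
      by rewrite (ltW x0) xM.
    - move=> x; rewrite /= in_itv /= => h; rewrite lee_fin; exact: gg_le_hh.
  apply: (@improper_le R M (Bnd M) (hh M) (GG M) M0).
  - move=> t /andP[t0 tM]; rewrite /hh invr_ge0; apply: mulr_ge0; first exact: sqrtr_ge0.
    lra.
  - move=> t ht; exact: hh_cont.
  - move=> t ht; exact: GG_derive.
  - move=> b hb; exact: GG_bound.
have Bk : (M + 1) * Bnd M <= (M + 1) / ss M * (ln (4 * (403 / 400)) + ln (2 * M + 1)).
  have s0 : 0 < ss M by rewrite sqrtr_gt0 /cc; nra.
  rewrite /Bnd.
  set X := ln (2 * _). set Y := ln (M + 2 / 5).
  have -> : (M + 1) * ((X - Y) / ss M) = (M + 1) / ss M * (X - Y) by ring.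
  rewrite ler_pM2l; last by apply: divr_gt0; lra.
  rewrite /X /Y.
  have e : ln (4 * (403 / 400) * (2 * M + 1) * (M + 2 / 5)) =
     ln (4 * (403 / 400)) + ln (2 * M + 1) + ln (M + 2 / 5).
    rewrite lnM ?posrE; try nra.
    by rewrite lnM ?posrE; try nra.
  have cX : 0 < 2 * (cc M * (M + 1) + (cc M + 1) * M) by rewrite /cc; nra.
  rewrite lerBlDr -e ler_ln ?posrE //; last by nra.
  have := sqr_ge0 (M - 3); rewrite /cc expr2; nra.
have y0 : 0 < ln (2 * M + 1) by apply: ln_gt0; lra.
split.
  apply: (lt_le_trans _ (lee_wpmul2l _ lo)); last by rewrite lee_fin; lra.
  rewrite -EFinM lte_fin.
  have -> : (M + 1) * (ln (2 * M + 1) / (2 * M + 1)) =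
    2^-1 * ln (2 * M + 1) + ln (2 * M + 1) / (2 * (2 * M + 1)) by field; lra.
  have : 0 < ln (2 * M + 1) / (2 * (2 * M + 1)) by apply: divr_gt0; lra.
  lra.
split; first exact: E.
rewrite -E.
apply: (le_lt_trans (lee_wpmul2l _ up)); first by rewrite lee_fin; lra.
rewrite -EFinM lte_fin; apply: (le_lt_trans Bk).
have := final_num M hM; lra.
Qed.
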